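(* Let $G$ be a block graph on $n$ vertices, i.e. a connected finite simple graph every block of which (maximal connected subgraph without a cut-vertex) is a clique. Let $w:E(G)\to\mathbb{R}_{>0}$ be a positive edge-weighting such that for every clique block $K$ with $|V(K)|=r\ge 4$, the restriction of $w$ to $E(K)$ is vertex-induced, i.e. there is $a_K:V(K)\to\mathbb{R}_{\ge0}$ with $w(uv)=\frac{a_K(u)+a_K(v)}{2}$ for all $uv\in E(K)$ (triangle blocks and bridges may carry arbitrary positive weights). For each edge $e$ define $C_w(e)$ as the maximum of $w(C)=\sum_{f\in E(C)}w(f)$ over all cycles $C\subseteq G$ containing $e$ if $e$ lies on a cycle, and $C_w(e)=2w(e)$ if $e$ is a bridge. Then $$\sum_{e\in E(G)}\frac{w(e)}{C_w(e)}=\frac{n-1}{2}.$$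
   Context: A bridge is an edge lying on no cycle. *)

(* Defs.v *)
From mathcomp Require Import all_boot all_order all_algebra.
Set Implicit Arguments. Unset Strict Implicit. Unset Printing Implicit Defensive.
Import Order.TTheory GRing.Theory Num.Theory.
Local Open Scope ring_scope.

Section Graph.
Variable T : finType.
Variable e : rel T.

Definition simple_graph : Prop := symmetric e /\ irreflexive e.

Definition edges : {set {set T}} := [set [set x; y] | x in T, y in T & e x y].

Definition erestr (B : {set T}) : rel T := [rel x y | [&& e x y, x \in B & y \in B]].

Definition connected_in (B : {set T}) : bool :=
  [forall x in B, forall y in B, connect (erestr B) x y].

Definition graph_connected : bool := connected_in setT.

Definition no_cut_vertex (B : {set T}) : bool :=
  connected_in B && [forall v in B, connected_in (B :\ v)].

Definition is_block (B : {set T}) : bool :=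
  no_cut_vertex B && [forall B' : {set T}, (B \subset B') && no_cut_vertex B' ==> (B' == B)].

Definition is_clique (B : {set T}) : bool :=
  [forall x in B, forall y in B, (x != y) ==> e x y].

Definition block_graph : Prop :=
  simple_graph /\ graph_connected /\ forall B, is_block B -> is_clique B.

Definition cycle_edges (s : seq T) : {set {set T}} :=
  [set [set x; next s x] | x in s].

Definition is_cycle_edgeset (F : {set {set T}}) : bool :=
  [exists k : 'I_(#|T|.+1), [exists t : k.-tuple T,
     [&& (2 < k)%N, uniq t, cycle e t & F == cycle_edges t]]].

Variable R : realFieldType.
Variable w : {set T} -> R.

Definition cycle_weight (F : {set {set T}}) : R := \sum_(g in F) w g.

Definition on_cycle (f : {set T}) : bool :=
  [exists F, is_cycle_edgeset F && (f \in F)].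

Definition Cw (f : {set T}) : R :=
  if on_cycle f then
    \big[Num.max/0]_(F | is_cycle_edgeset F && (f \in F)) cycle_weight F
  else 2 * w f.

End Graph.

(* Main.v *)
Require Import Defs.
From mathcomp Require Import all_boot all_order all_algebra.
From mathcomp Require Import ring.
Set Implicit Arguments. Unset Strict Implicit. Unset Printing Implicit Defensive.
Import Order.TTheory GRing.Theory Num.Theory.

Section G.
Variable T : finType.
Variable e : rel T.
Hypothesis esym : symmetric e.
Hypothesis eirr : irreflexive e.
Hypothesis hblk : forall B, is_block e B -> is_clique e B.

Lemma erestr_sym (B : {set T}) : symmetric (erestr e B).
Proof. move=> x y; rewrite /erestr /= (esym x y); case: (x \in B); case: (y \in B); by rewrite ?andbF. Qed.

Lemma cliqueP (B : {set T}) : reflect {in B &, forall x y, x != y -> e x y} (is_clique e B).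
Proof.
apply: (iffP forall_inP) => [H x y xB yB xy | H x xB].
  by move/forall_inP: (H x xB) => /(_ y yB)/implyP; apply.
by apply/forall_inP => y yB; apply/implyP; exact: H.
Qed.

Lemma connectedP (B : {set T}) : reflect {in B &, forall x y, connect (erestr e B) x y} (connected_in e B).
Proof.
apply: (iffP forall_inP) => [H x y xB yB | H x xB].
  by move/forall_inP: (H x xB) => /(_ y yB).
by apply/forall_inP => y yB; exact: H.
Qed.

Lemma nocut_clique (B : {set T}) : no_cut_vertex e B -> is_clique e B.
Proof.
move=> nB.
have P0 : (B \subset B) && no_cut_vertex e B by rewrite subxx.
case: (@arg_maxnP _ B (fun B' : {set T} => (B \subset B') && no_cut_vertex e B') (fun B' : {set T} => #|B'|) P0) => B' /andP[sBB' nB'] maxB.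
have bB' : is_block e B'.
  apply/andP; split => //; apply/forallP => B''; apply/implyP => /andP[s1 n1].
  have := maxB B''; rewrite (subset_trans sBB' s1) n1 => /(_ isT) c.
  by rewrite eq_sym eqEcard s1 /=; exact: c.
apply/cliqueP => x y xB yB; move/cliqueP: (hblk bB'); apply; exact: (subsetP sBB').
Qed.

Lemma clique_nocut (B : {set T}) : is_clique e B -> no_cut_vertex e B.
Proof.
have H : forall C : {set T}, {in C &, forall x y, x != y -> e x y} -> connected_in e C.
  move=> C HC; apply/connectedP => x y xC yC.
  have [<-|xy] := eqVneq x y; first exact: connect0.
  by apply: connect1; rewrite /erestr /= HC ?xC ?yC.
move/cliqueP=> cB; apply/andP; split; first exact: H.
apply/forallP=> v; apply/implyP=> vB; apply: H => x y /setD1P[_ xB] /setD1P[_ yB]; exact: cB.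
Qed.

Lemma path_connected (B : {set T}) x p : path e x p -> {subset x :: p <= B} ->
  {in x :: p &, forall y z, connect (erestr e B) y z}.
Proof.
move=> pp sub.
have pB : path (erestr e B) x p.
  apply: (@sub_in_path _ (mem B) e); last exact: pp.
    by move=> y z yB zB eyz; rewrite /erestr /= eyz yB zB.
  by apply/allP => y /sub.
have cs := sym_connect_sym (erestr_sym B).
move=> y z yp zp; apply: (connect_trans (y := x)).
  by rewrite cs; exact: path_connect pB _ yp.
exact: path_connect pB _ zp.
Qed.

Lemma cycle_nocut t : uniq t -> cycle e t -> no_cut_vertex e [set x in t].
Proof.
move=> ut ct; apply/andP; split.
  case: t ut ct => [|x p] ut ct.
    by apply/connectedP => y; rewrite inE.
  apply/connectedP => y z; rewrite !inE => yt zt.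
  move: ct; rewrite /= rcons_path => /andP[pp _].
  have sub : {subset x :: p <= [set x0 in x :: p]} by move=> u uP; rewrite in_set.
  exact: (path_connected pp sub yt zt).
apply/forallP => v; apply/implyP; rewrite inE => vt.
case: (rot_to vt) => i q eq.
have ut' : uniq (v :: q) by rewrite -eq rot_uniq.
have ct' : cycle e (v :: q) by rewrite -eq rot_cycle.
have memq : forall u, (u \in [set x in t] :\ v) = (u \in q).
  move=> u; rewrite !inE -(mem_rot i) eq inE.
  case: eqVneq => [->|//]; by move: ut' => /= /andP[/negbTE ->].
case: q ut' ct' memq eq => [|h q] ut' ct' memq eq.
  by apply/connectedP => y; rewrite memq.
apply/connectedP => y z; rewrite !memq => yq zq.
move: ct'; rewrite /= => /andP[_]; rewrite rcons_path => /andP[pp _].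
have sub : {subset h :: q <= [set x in t] :\ v} by move=> u; rewrite memq.
exact: (path_connected pp sub yq zq).
Qed.

Lemma cycle_clique t : uniq t -> cycle e t ->
  {in t &, forall x y, x != y -> e x y}.
Proof.
move=> ut ct x y xt yt.
have /cliqueP := nocut_clique (cycle_nocut ut ct).
by apply; rewrite inE.
Qed.


Definition Kf (f : {set T}) : {set T} := [set z | (z \in f) || [forall u in f, e u z]].

Lemma Kf2 x y z : (z \in Kf [set x; y]) = [|| z == x, z == y | e x z && e y z].
Proof.
rewrite inE !inE -orbA; congr (_ || (_ || _)).
apply/forall_inP/andP => [H | [H1 H2] u]; first by rewrite !H ?inE ?eqxx ?orbT.
by rewrite !inE => /orP[] /eqP->.
Qed.

Lemma edgesP f : reflect (exists x y, e x y /\ f = [set x; y]) (f \in edges e).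
Proof.
apply: (iffP imset2P) => [[x y _ yin ->] | [x [y [exy ->]]]].
  by move: yin; rewrite inE => exy; exists x, y.
by apply: (Imset2spec (x1 := x) (x2 := y)) => //; rewrite inE.
Qed.

Lemma four_cycle x y z1 z2 : e x y -> e x z1 -> e y z1 -> e x z2 -> e y z2 ->
  z1 != z2 -> e z1 z2.
Proof.
move=> exy ex1 ey1 ex2 ey2 n12.
have neq a b : e a b -> a != b by move=> eab; apply/eqP=> ab; move: eab; rewrite ab eirr.
have ut : uniq [:: x; z1; y; z2].
  by rewrite /= !inE !negb_or (neq _ _ ex1) (neq _ _ exy) (neq _ _ ex2) n12
    (neq _ _ ey2) eq_sym (neq _ _ ey1).
have ct : cycle e [:: x; z1; y; z2] by rewrite /= ex1 esym ey1 ey2 esym ex2.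
by apply: (cycle_clique ut ct) => //; rewrite !inE eqxx ?orbT.
Qed.

Lemma Kf_clique x y : e x y -> is_clique e (Kf [set x; y]).
Proof.
move=> exy; apply/cliqueP => a b; rewrite !Kf2.
move=> /or3P[/eqP->|/eqP->|/andP[xa ya]] /or3P[/eqP->|/eqP->|/andP[xb yb]];
  rewrite ?eqxx // => nab.
- by rewrite esym.
- by rewrite esym.
- by rewrite esym.
- exact: (four_cycle exy).
Qed.

Lemma Kf_sub x y : e x y -> [set x; y] \subset Kf [set x; y].
Proof. by move=> _; apply/subsetP => z; rewrite Kf2 !inE => /orP[]->; rewrite ?orbT. Qed.

Lemma clique_sub_Kf (B : {set T}) x y : is_clique e B -> x \in B -> y \in B ->
  B \subset Kf [set x; y].
Proof.
move/cliqueP=> cB xB yB; apply/subsetP => z zB; rewrite Kf2.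
have [//|zx] := eqVneq z x.
have [//|zy] := eqVneq z y.
by rewrite /= cB // 1?eq_sym // cB // eq_sym.
Qed.

Lemma Kf_block x y : e x y -> is_block e (Kf [set x; y]).
Proof.
move=> exy; apply/andP; split; first exact/clique_nocut/Kf_clique.
apply/forallP => B; apply/implyP => /andP[sB nB].
have cB := nocut_clique nB.
have xB : x \in B by apply: (subsetP sB); rewrite Kf2 eqxx.
have yB : y \in B by apply: (subsetP sB); rewrite Kf2 eqxx orbT.
by rewrite eqEsubset (clique_sub_Kf cB xB yB) sB.
Qed.

Lemma block_Kf (K : {set T}) x y : is_block e K -> e x y -> x \in K -> y \in K ->
  Kf [set x; y] = K.
Proof.
move=> bK exy xK yK.
have sK := clique_sub_Kf (hblk bK) xK yK.
move: bK => /andP[_ /forallP/(_ (Kf [set x; y]))].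
by rewrite sK clique_nocut ?Kf_clique // => /eqP.
Qed.


Lemma cycle_edgesetP (F : {set {set T}}) : reflect (exists t : seq T,
   [/\ uniq t, (2 < size t)%N, cycle e t & F = cycle_edges t]) (is_cycle_edgeset e F).
Proof.
apply: (iffP existsP) => [[k /existsP[t /and4P[k2 ut ct /eqP->]]] | [t [ut st ct ->]]].
  by exists t; rewrite size_tuple.
have H : (size t < #|T|.+1)%N by rewrite ltnS -(card_uniqP ut) max_card.
exists (Ordinal H); apply/existsP; exists (in_tuple t).
by rewrite /= st ut ct eqxx.
Qed.

Lemma next_next (t : seq T) (x : T) : uniq t -> (2 < size t)%N -> x \in t -> next t (next t x) != x.
Proof.
move=> ut st xt; case: (rot_to xt) => i q eq.
have ut' : uniq (x :: q) by rewrite -eq rot_uniq.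
rewrite -!(next_rot i ut) eq.
have : (2 < size (x :: q))%N by rewrite -eq size_rot.
case: q ut' {eq} => [|a [|b q]] // ut' _.
move: ut'; rewrite /= !inE !negb_or => /and3P[/andP[xa /andP[xb _]] /andP[ab _] _].
rewrite eqxx.
have xa' : (a == x) = false by apply/negbTE; rewrite eq_sym.
rewrite xa' eqxx.
by rewrite eq_sym.
Qed.


Lemma cycle_edges_inj (t : seq T) : uniq t -> (2 < size t)%N ->
  {in t &, injective (fun x => [set x; next t x])}.
Proof.
move=> ut st x y xt yt /= eqs; apply/eqP/negP => /negP nxy.
have : x \in [set y; next t y] by rewrite -eqs !inE eqxx.
rewrite !inE (negbTE nxy) /= => /eqP xn.
have : y \in [set x; next t x] by rewrite eqs !inE eqxx.
rewrite !inE eq_sym (negbTE nxy) /= => /eqP yn.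
by move: (next_next ut st xt); rewrite -yn -xn eqxx.
Qed.

Lemma cycle_edge_mem (t : seq T) x y : cycle e t -> [set x; y] \in cycle_edges t ->
  e x y /\ x \in t /\ y \in t.
Proof.
move=> ct /imsetP[u ut /setP eqs].
have nu := next_cycle ct ut.
have mu : next t u \in t by rewrite mem_next.
have nn : next t u != u by apply/eqP => h; move: nu; rewrite h eirr.
have u_in : u \in [set x; y] by rewrite eqs !inE eqxx.
have n_in : next t u \in [set x; y] by rewrite eqs !inE eqxx orbT.
have x_in : x \in [set u; next t u] by rewrite -eqs !inE eqxx.
have y_in : y \in [set u; next t u] by rewrite -eqs !inE eqxx orbT.
move: x_in y_in; rewrite !inE => /orP[] /eqP xv /orP[] /eqP yv; subst x y.
- by move: n_in; rewrite !inE orbb (negbTE nn).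
- by [].
- by split => //; rewrite esym.
- by move: u_in; rewrite !inE orbb eq_sym (negbTE nn).
Qed.

Variable R : realFieldType.
Variable w : {set T} -> R.
Local Open Scope ring_scope.
Hypothesis wpos : forall f, f \in edges e -> 0 < w f.

Definition vind (K : {set T}) (a : T -> R) := forall u v, u \in K -> v \in K -> u != v ->
  w [set u; v] = (a u + a v) / 2.
Definition bnd (K : {set T}) (a : T -> R) := forall t : seq T, uniq t -> {subset t <= K} ->
  (2 < size t)%N -> \sum_(x in t) a x <= \sum_(x in K) a x.

Lemma sum_next (h : T -> R) (t : seq T) : uniq t ->
  \sum_(x in t) h (next t x) = \sum_(x in t) h x.
Proof.
move=> ut; rewrite [RHS](reindex_inj (can_inj (prev_next ut))) /=.
by apply: eq_bigl => x; rewrite mem_next.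
Qed.

Lemma cycle_weight_a (K : {set T}) a (t : seq T) : vind K a -> uniq t -> (2 < size t)%N ->
  cycle e t -> {subset t <= K} -> cycle_weight w (cycle_edges t) = \sum_(x in t) a x.
Proof.
move=> va ut st ct sK; rewrite /cycle_weight /cycle_edges big_imset; last exact: cycle_edges_inj.
rewrite /=.
transitivity (\sum_(x in t) (a x + a (next t x)) / 2).
  apply: eq_bigr => x xt; apply: va; rewrite ?sK ?mem_next //.
  by apply/eqP => h; move: (next_cycle ct xt); rewrite -h eirr.
rewrite -mulr_suml big_split /= sum_next //.
by field.
Qed.


Lemma clique_path (K : {set T}) x p : is_clique e K -> uniq (x :: p) ->
  {subset x :: p <= K} -> path e x p.
Proof.
move/cliqueP=> cK; elim: p x => [//|y p IH] x /= /andP[xyp /andP[yp up]] sK.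
rewrite cK ?sK ?inE ?eqxx ?orbT //.
  apply: IH; first by rewrite /= yp.
  by move=> z zp; apply: sK; rewrite inE zp orbT.
by apply: contra xyp => /eqP->; rewrite inE eqxx.
Qed.

Lemma clique_cycle (K : {set T}) (t : seq T) : is_clique e K -> uniq t ->
  {subset t <= K} -> (1 < size t)%N -> cycle e t.
Proof.
move=> cK ut sK; case: t ut sK => [//|x [//|y p]] ut sK _.
have pp : path e x (y :: p) by apply: (clique_path cK).
change (path e x (rcons (y :: p) x)); rewrite rcons_path pp /=.
have ly : last y p \in y :: p by exact: mem_last.
move/cliqueP: cK; apply.
- by apply: sK; rewrite inE ly orbT.
- by apply: sK; rewrite inE eqxx.
- by apply: contraL ly => /eqP->; move: ut => /= /andP[].
Qed.

Lemma cycle_in_block (K : {set T}) x y (t : seq T) : is_block e K -> e x y ->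
  x \in K -> y \in K -> uniq t -> cycle e t -> [set x; y] \in cycle_edges t ->
  {subset t <= K}.
Proof.
move=> bK exy xK yK ut ct fin z zt.
have [_ [xt yt]] := cycle_edge_mem ct fin.
rewrite -(block_Kf bK exy xK yK) Kf2.
have [//|zx] := eqVneq z x.
have [//|zy] := eqVneq z y.
by rewrite /= !(cycle_clique ut ct) // eq_sym.
Qed.

Definition ham (x y : T) (K : {set T}) := [:: x, y & enum (K :\ x :\ y)].

Lemma ham_props (K : {set T}) x y : x \in K -> y \in K -> x != y ->
  [/\ uniq (ham x y K), ham x y K =i K & size (ham x y K) = #|K| ].
Proof.
move=> xK yK xy.
have mem : ham x y K =i K.
  move=> z; rewrite /ham !inE mem_enum !inE.
  have [->|zx] := eqVneq z x; first by rewrite xK.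
  have [->|zy] := eqVneq z y; first by rewrite yK.
  by [].
split => //.
  by rewrite /ham /= !inE !mem_enum !inE !eqxx /= andbF orbF xy enum_uniq.
rewrite /ham /= -cardE (cardsD1 x K) (cardsD1 y (K :\ x)) xK !inE eq_sym xy yK.
by rewrite add1n.
Qed.


Lemma Cw_block (K : {set T}) a x y : is_block e K -> (2 < #|K|)%N -> vind K a -> bnd K a ->
  e x y -> x \in K -> y \in K -> Cw e w [set x; y] = \sum_(z in K) a z.
Proof.
move=> bK K3 va ba exy xK yK.
have xy : x != y by apply/eqP => h; move: exy; rewrite h eirr.
set t := ham x y K.
have [ut mt st] := ham_props xK yK xy.
have cK := hblk bK.
have subt : {subset t <= K} by move=> z; rewrite mt.
have st3 : (2 < size t)%N by rewrite st.
have ct : cycle e t by apply: (clique_cycle cK ut subt); rewrite st ltnW.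
have fin : [set x; y] \in cycle_edges t.
  apply/imsetP; exists x; first by rewrite /t /ham inE eqxx.
  have -> // : next t x = y by rewrite /t /ham /= eqxx.
have ce : is_cycle_edgeset e (cycle_edges t) by apply/cycle_edgesetP; exists t.
have wt : cycle_weight w (cycle_edges t) = \sum_(z in K) a z.
  rewrite (cycle_weight_a va ut st3 ct subt); apply: eq_bigl => z; exact: mt.
have oc : on_cycle e [set x; y] by apply/existsP; exists (cycle_edges t); rewrite ce fin.
rewrite /Cw oc; apply/eqP; rewrite eq_le; apply/andP; split.
  apply: bigmax_le.
    rewrite -wt; apply: sumr_ge0 => g /imsetP[z zt ->]; apply/ltW/wpos/edgesP.
    by exists z, (next t z); split => //; exact: next_cycle ct zt.
  move=> F /andP[/cycle_edgesetP[t' [ut' st' ct' ->]] fin'].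
  have sub' := cycle_in_block bK exy xK yK ut' ct' fin'.
  rewrite (cycle_weight_a va ut' st' ct' sub'); exact: ba.
rewrite -{1}wt; apply: le_bigmax_cond; by rewrite ce fin.
Qed.

Lemma Cw_bridge (K : {set T}) x y : is_block e K -> #|K| = 2%N -> e x y -> x \in K -> y \in K ->
  Cw e w [set x; y] = 2 * w [set x; y].
Proof.
move=> bK K2 exy xK yK.
rewrite /Cw; case: ifP => // /existsP[F /andP[/cycle_edgesetP[t [ut st ct ->]] fin]].
have sub := cycle_in_block bK exy xK yK ut ct fin.
have sub2 : {subset t <= enum K} by move=> z zt; rewrite mem_enum sub.
have := uniq_leq_size ut sub2.
by rewrite -cardE K2 leqNgt st.
Qed.


Lemma sum2 (h : T -> R) x y : x != y -> \sum_(u in [set x; y]) h u = h x + h y.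
Proof.
move=> xy; rewrite (big_setD1 x) ?inE ?eqxx //=.
have -> : [set x; y] :\ x = [set y].
  apply/setP => z; rewrite !inE; have [->|] //= := eqVneq z x.
  by rewrite (negbTE xy).
by rewrite big_set1.
Qed.

Definition EK (K : {set T}) := [set g in edges e | g \subset K].

Lemma EK_deg (K : {set T}) u : is_clique e K -> u \in K ->
  #|[set g in EK K | u \in g]| = (#|K| - 1)%N.
Proof.
move=> cK uK.
have -> : [set g in EK K | u \in g] = [set [set u; v] | v in K :\ u].
  apply/setP => g; rewrite !inE; apply/andP/imsetP.
    move=> [/andP[/edgesP[x [y [exy ->]]] sK] ug].
    have xy : x != y by apply/eqP => h; move: exy; rewrite h eirr.
    move: ug; rewrite !inE => /orP[] /eqP ->.
      by exists y; rewrite // !inE eq_sym xy (subsetP sK) // !inE eqxx orbT.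
    exists x; last by rewrite setUC.
    by rewrite !inE xy (subsetP sK) // !inE eqxx.
  move=> [v /setD1P[vu vK] ->]; split; last by rewrite !inE eqxx.
  apply/andP; split.
    by apply/edgesP; exists u, v; split => //; move/cliqueP: cK; apply; rewrite // eq_sym.
  by apply/subsetP => z; rewrite !inE => /orP[] /eqP->.
rewrite card_in_imset.
  by rewrite (cardsD1 u K) uK add1n subn1.
move=> v1 v2 /setD1P[v1u _] /setD1P[v2u _] /setP /(_ v1).
by rewrite !inE eqxx orbT (negbTE v1u) /= => h; apply/eqP; rewrite -h.
Qed.

Lemma DC (K : {set T}) (h : T -> R) : is_clique e K ->
  \sum_(g in EK K) \sum_(u in g) h u = (#|K| - 1)%:R * \sum_(u in K) h u.
Proof.
move=> cK.
rewrite (exchange_big_dep (mem K)) /=; last first.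
  by move=> g u; rewrite inE => /andP[_ /subsetP sK] /sK.
rewrite mulr_sumr; apply: eq_bigr => u uK.
rewrite (eq_bigl (mem [set g in EK K | u \in g])); last by move=> g; rewrite !inE.
by rewrite sumr_const EK_deg // mulr_natl.
Qed.

Lemma EK_edge (K : {set T}) g : g \in EK K -> exists x y, [/\ e x y, x \in K, y \in K & g = [set x; y]].
Proof.
rewrite inE => /andP[/edgesP[x [y [exy ->]]] sK].
by exists x, y; split => //; apply: (subsetP sK); rewrite !inE eqxx ?orbT.
Qed.


Lemma get_a (K : {set T}) x y : is_block e K -> (2 < #|K|)%N -> e x y -> x \in K -> y \in K ->
  ((4 <= #|K|)%N -> exists a : T -> R, (forall v, v \in K -> 0 <= a v) /\
       (forall u v, u \in K -> v \in K -> u != v -> w [set u; v] = (a u + a v) / 2)) ->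
  exists a, vind K a /\ bnd K a.
Proof.
move=> bK K3 exy xK yK H4.
have xy : x != y by apply/eqP => h; move: exy; rewrite h eirr.
case: (leqP 4 #|K|) => [K4 | K4].
  have [a [a0 va]] := H4 K4; exists a; split => // t ut sK st.
  rewrite [X in _ <= X](bigID (mem t)) /=.
  have -> : \sum_(i in K | i \in t) a i = \sum_(i in t) a i.
    by apply: eq_bigl => z; case zt: (z \in t); rewrite ?andbT ?andbF ?sK.
  by rewrite lerDl; apply: sumr_ge0 => z /andP[zK _]; exact: a0.
have K3' : #|K| = 3%N by apply/eqP; rewrite eqn_leq -ltnS K4 K3.
have : #|K :\ x :\ y| == 1%N.
  by move: K3'; rewrite (cardsD1 x K) (cardsD1 y (K :\ x)) xK !inE eq_sym xy yK /= !add1n => /eqP; rewrite !eqSS.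
case/cards1P => z Ez.
have zin : z \in K :\ x :\ y by rewrite Ez set11.
move: (zin); rewrite !inE => /and3P[zy zx zK].
have memK : forall u, (u \in K) = [|| u == x, u == y | u == z].
  move=> u; apply/idP/idP.
    move=> uK; have [//|ux] := eqVneq u x; have [//|uy] := eqVneq u y.
    have : u \in K :\ x :\ y by rewrite !inE ux uy uK.
    by rewrite Ez inE => ->; rewrite orbT.
  by move=> /or3P[]/eqP->.
pose A := w [set x; y]; pose B := w [set x; z]; pose C := w [set y; z].
pose a u := if u == x then A + B - C else if u == y then A + C - B else B + C - A.
have yx : (y == x) = false by rewrite eq_sym (negbTE xy).
have Syx : [set y; x] = [set x; y] := setUC _ _.
have Szx : [set z; x] = [set x; z] := setUC _ _.
have Szy : [set z; y] = [set y; z] := setUC _ _.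
exists a; split; last first.
  move=> t ut sK st.
  have sub : t \subset K by apply/subsetP.
  have E : #|t| = #|K|.
    by apply/eqP; rewrite eqn_leq subset_leq_card // K3' (card_uniqP ut).
  by rewrite (eq_bigl _ _ (subset_cardP E sub)).
move=> u v; rewrite !memK => /or3P[]/eqP-> /or3P[]/eqP->; rewrite ?eqxx // => _;
  rewrite /a ?eqxx ?yx ?(negbTE zx) ?(negbTE zy) ?Syx ?Szx ?Szy -/A -/B -/C.
all: by field.
Qed.


Lemma S_pos (K : {set T}) a x y : is_block e K -> (2 < #|K|)%N -> vind K a ->
  e x y -> x \in K -> y \in K -> 0 < \sum_(z in K) a z.
Proof.
move=> bK K3 va exy xK yK.
have xy : x != y by apply/eqP => h; move: exy; rewrite h eirr.
set t := ham x y K.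
have [ut mt st] := ham_props xK yK xy.
have cK := hblk bK.
have subt : {subset t <= K} by move=> z; rewrite mt.
have st3 : (2 < size t)%N by rewrite st.
have ct : cycle e t by apply: (clique_cycle cK ut subt); rewrite st ltnW.
have fin : [set x; y] \in cycle_edges t.
  apply/imsetP; exists x; first by rewrite /t /ham inE eqxx.
  have -> // : next t x = y by rewrite /t /ham /= eqxx.
have wt : cycle_weight w (cycle_edges t) = \sum_(z in K) a z.
  rewrite (cycle_weight_a va ut st3 ct subt); apply: eq_bigl => z; exact: mt.
rewrite -wt /cycle_weight (bigD1 [set x; y]) //=.
have wp : 0 < w [set x; y] by apply/wpos/edgesP; exists x, y.
apply: (lt_le_trans wp); rewrite lerDl; apply: sumr_ge0 => g /andP[/imsetP[z zt ->] _].
apply/ltW/wpos/edgesP; exists z, (next t z); split => //; exact: next_cycle ct zt.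
Qed.

Lemma block_sum (K : {set T}) : is_block e K -> (1 < #|K|)%N ->
  ((4 <= #|K|)%N -> exists a : T -> R, (forall v, v \in K -> 0 <= a v) /\
       (forall u v, u \in K -> v \in K -> u != v -> w [set u; v] = (a u + a v) / 2)) ->
  \sum_(g in EK K) (w g / Cw e w g - (#|K|%:R)^-1) = 0.
Proof.
move=> bK K1 H4.
have cK := hblk bK.
case K2: (#|K| == 2%N).
  apply: big1 => g /EK_edge[x [y [exy xK yK ->]]].
  rewrite (Cw_bridge bK (eqP K2) exy xK yK) (eqP K2).
  have wn : w [set x; y] != 0 by rewrite gt_eqF //; apply/wpos/edgesP; exists x, y.
  by field.
have K3 : (2 < #|K|)%N by rewrite ltn_neqAle eq_sym K2 K1.
have [x xK] : exists x, x \in K by apply/card_gt0P; rewrite (ltn_trans _ K1).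
have [y /setD1P[yx yK]] : exists y, y \in K :\ x.
  by apply/card_gt0P; move: K3; rewrite (cardsD1 x K) xK add1n ltnS => /ltnW.
have exy : e x y by move/cliqueP: cK; apply; rewrite // eq_sym.
have [a [va ba]] := get_a bK K3 exy xK yK H4.
have Sp := S_pos bK K3 va exy xK yK.
set S := \sum_(z in K) a z in Sp.
have Sn : S != 0 by rewrite gt_eqF.
have rn : (#|K|%:R : R) != 0 by rewrite pnatr_eq0 -lt0n (ltn_trans _ K1).
have -> : \sum_(g in EK K) (w g / Cw e w g - (#|K|%:R)^-1) =
    \sum_(g in EK K) \sum_(u in g) (a u / (2 * S) - (2 * #|K|%:R)^-1).
  apply: eq_bigr => g /EK_edge[u [v [euv uK vK ->]]].
  have uv : u != v by apply/eqP => h; move: euv; rewrite h eirr.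
  rewrite (Cw_block bK K3 va ba euv uK vK) sum2 // (va u v uK vK uv) -/S.
  by field; rewrite rn Sn.
rewrite DC // big_split /= sumr_const -mulr_suml -/S -mulr_natl.
by field; rewrite rn Sn.
Qed.


Lemma path_in (V : {set T}) x s : path (erestr e V) x s -> {subset s <= V}.
Proof.
elim: s x => [//|y s IH] x /= /andP[/and3P[_ _ yV] ps] z.
by rewrite inE => /orP[/eqP->//|]; apply: IH ps z.
Qed.

Lemma path_restr (V W : {set T}) x s : path (erestr e V) x s -> x \in W ->
  {subset s <= W} -> path (erestr e W) x s.
Proof.
move=> ps xW sW; apply: (@sub_in_path _ (mem W) (erestr e V)) => //.
  by move=> a b aW bW /and3P[eab _ _]; rewrite /erestr /= eab aW bW.
by apply/allP => z; rewrite inE => /orP[/eqP->//|]; exact: sW.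
Qed.

Lemma conn_sym (V : {set T}) a b : connect (erestr e V) a b = connect (erestr e V) b a.
Proof. exact: (sym_connect_sym (erestr_sym V)). Qed.

Lemma noncut (V : {set T}) x0 : x0 \in V -> connected_in e V ->
  exists2 v, v \in V & connected_in e (V :\ v).
Proof.
move=> x0V cV.
pose P n := [exists x, [exists p : n.-tuple T, [&& x \in V, uniq (x :: p) & path (erestr e V) x p]]].
have P0 : exists n, P n.
  by exists 0%N; apply/existsP; exists x0; apply/existsP; exists [tuple]; rewrite x0V.
have Pb : forall n, P n -> (n <= #|T|)%N.
  move=> n /existsP[x /existsP[p /and3P[_ up _]]].
  by have := max_card (mem (x :: p)); rewrite (card_uniqP up) /= size_tuple => /ltnW.
case: (ex_maxnP P0 Pb) => n /existsP[x /existsP[p /and3P[xV up pp]]] maxn.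
have [q [sq {}up {}pp]] : exists q : seq T, [/\ size q = n, uniq (x :: q) & path (erestr e V) x q].
  by exists p; rewrite size_tuple.
clear p.
set v := last x q.
have vV : v \in V.
  have := mem_last x q; rewrite -/v inE => /orP[/eqP->//|]; exact: path_in pp v.
exists v => //.
have claim : forall a, a \in V :\ v -> connect (erestr e (V :\ v)) a x /\ x != v.
  move=> a /setD1P[av aV].
  have /connectP[s ps ls] : connect (erestr e V) a v by move/connectedP: cV; apply.
  move: ls; case: (shortenP ps) => s' ps' us' _ ls {ps s}.
  case/lastP: s' ps' us' ls => [|s1 u'] ps' us' ls.
    by move: av; rewrite ls eqxx.
  move: ls; rewrite last_rcons => ls; subst u'.
  move: ps'; rewrite rcons_path => /andP[ps1 euv].
  move: us'; rewrite -rcons_cons rcons_uniq => /andP[vas1 uas1].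
  set u := last a s1 in euv.
  have s1V : {subset s1 <= V :\ v}.
    move=> z zs; rewrite in_setD1 (path_in ps1 zs) andbT.
    by apply: contra vas1 => /eqP <-; rewrite inE zs orbT.
  have aV' : a \in V :\ v by rewrite in_setD1 av aV.
  have ps1' := path_restr ps1 aV' s1V.
  have cau : connect (erestr e (V :\ v)) a u.
    by apply: (path_connect ps1'); rewrite /u mem_last.
  have uv : u != v.
    by apply: contra vas1 => /eqP <-; rewrite /u mem_last.
  move: euv => /and3P[euv' uV _].
  case uP: (u \in x :: q); last first.
    have H : size (rcons q u) == n.+1 by rewrite size_rcons sq.
    have : P n.+1.
      apply/existsP; exists x; apply/existsP; exists (Tuple H).
      have /andP[ux uq] : (u != x) && (u \notin q) by move: uP; rewrite inE => /negbT; rewrite negb_or.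
      move: up => /= /andP[xq uqq].
      rewrite /= xV mem_rcons inE negb_or eq_sym ux xq rcons_uniq uq uqq /= rcons_path pp /=.
      by rewrite /erestr /= esym euv' vV uV.
    by move/maxn; rewrite ltnn.
  have [y [q' Eq]] : exists y q', q = y :: q'.
    case Eq: q => [|y q']; last by exists y, q'.
    by move: uP uv; rewrite /v Eq inE => /eqP ->; rewrite eqxx.
  have Ev : v = last y q' by rewrite /v Eq.
  rewrite Eq in up pp uP.
  move: pp; rewrite lastI rcons_path => /andP[pb _].
  move: up; rewrite lastI rcons_uniq /= -Ev => /andP[vb _].
  have bV : {subset belast y q' <= V :\ v}.
    move=> z zs; rewrite in_setD1 (path_in pb zs) andbT.
    by apply: contra vb => /eqP <-; rewrite inE zs orbT.
  have xv : x != v by apply: contra vb => /eqP <-; rewrite inE eqxx.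
  have xV' : x \in V :\ v by rewrite in_setD1 xv xV.
  have pb' := path_restr pb xV' bV.
  have ub : u \in x :: belast y q'.
    by move: uP; rewrite lastI mem_rcons inE /= -Ev (negbTE uv).
  split => //; apply: (connect_trans cau); rewrite conn_sym.
  exact: (path_connect pb').
apply/connectedP => a b aV bV.
have [ca _] := claim a aV; have [cb _] := claim b bV.
by apply: (connect_trans ca); rewrite conn_sym.
Qed.


Definition EV (V : {set T}) := [set f in edges e | f \subset V].
Definition Nb (V : {set T}) v := [set u in V | e v u].

Lemma N_clique (V : {set T}) v : v \in V -> connected_in e (V :\ v) -> is_clique e (Nb V v).
Proof.
move=> vV cV'; apply/cliqueP => y z; rewrite !inE => /andP[yV evy] /andP[zV evz] yz.
have yv : y != v by apply/eqP => h; move: evy; rewrite h eirr.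
have zv : z != v by apply/eqP => h; move: evz; rewrite h eirr.
have yV' : y \in V :\ v by rewrite in_setD1 yv yV.
have zV' : z \in V :\ v by rewrite in_setD1 zv zV.
have /connectP[p pp lp] : connect (erestr e (V :\ v)) y z by move/connectedP: cV'; apply.
move: lp; case: (shortenP pp) => p' pp' up' _ lp {pp p}.
have sp : {subset y :: p' <= V :\ v}.
  by move=> u; rewrite inE => /orP[/eqP->//|]; exact: (path_in pp').
have vp : v \notin y :: p'.
  by apply/negP => /sp; rewrite in_setD1 eqxx.
have ut : uniq [:: v, y & p'] by rewrite /= vp.
have ct : cycle e [:: v, y & p'].
  change (path e v (rcons (y :: p') v)); rewrite rcons_path /= evy.
  rewrite (@sub_path _ (erestr e (V :\ v)) e _ y p') //; last by move=> a b /and3P[].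
  by rewrite -lp esym.
apply: (cycle_clique ut ct) => //.
- by rewrite !inE eqxx orbT.
- by rewrite lp inE mem_last orbT.
Qed.


Lemma Kf_vedge (V : {set T}) v u : v \in V -> connected_in e (V :\ v) -> u \in V -> e v u ->
  Kf [set v; u] :&: V = v |: Nb V v.
Proof.
move=> vV cV' uV evu; have cN := N_clique vV cV'.
apply/setP => z; rewrite in_setI Kf2 in_setU1 !inE.
have [->|zv] := eqVneq z v; first by rewrite vV.
have [->|zu] := eqVneq z u; first by rewrite uV evu.
rewrite /= andbC; case zV: (z \in V) => //=.
apply/andP/idP => [[]//|evz]; split => //.
by move/cliqueP: cN; apply; rewrite ?inE ?uV ?zV ?evu // eq_sym.
Qed.

Lemma Kf_Nedge (V : {set T}) v x y : v \in V -> connected_in e (V :\ v) -> e x y ->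
  x \in Nb V v -> y \in Nb V v -> Kf [set x; y] :&: V = v |: Nb V v.
Proof.
move=> vV cV' exy xN yN; have cN := N_clique vV cV'.
move: (xN) (yN); rewrite !inE => /andP[xV evx] /andP[yV evy].
apply/setP => z; rewrite in_setI Kf2 in_setU1 !inE.
have [->|zv] := eqVneq z v; first by rewrite vV !(esym _ v) evx evy !orbT.
have [->|zx] := eqVneq z x; first by rewrite xV evx.
have [->|zy] := eqVneq z y; first by rewrite yV evy.
rewrite /= andbC; case zV: (z \in V) => //=.
apply/andP/idP => [[exz eyz]|evz].
  rewrite esym; apply: (four_cycle exy exz eyz) => //; by rewrite esym.
by split; move/cliqueP: cN; apply; rewrite ?inE ?xV ?yV ?zV ?evx ?evy ?evz // eq_sym.
Qed.

Lemma Kf_other (V : {set T}) v x y : e x y -> x \in V :\ v -> y \in V :\ v ->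
  ~~ ([set x; y] \subset Nb V v) -> Kf [set x; y] :&: (V :\ v) = Kf [set x; y] :&: V.
Proof.
move=> exy xV yV nsub; apply/setP => z; rewrite !in_setI in_setD1.
have [->|//] := eqVneq z v; rewrite /= Kf2.
move: xV yV; rewrite !in_setD1 => /andP[vx xV] /andP[vy yV].
suff -> : [|| v == x, v == y | e x v && e y v] = false by [].
apply/negbTE; rewrite !negb_or eq_sym vx eq_sym vy /=; apply/negP => /andP[exv eyv].
move/negP: nsub; apply; apply/subsetP => z'; rewrite !inE => /orP[]/eqP->.
  by rewrite xV esym.
by rewrite yV esym.
Qed.


Lemma count (V : {set T}) : V != set0 -> connected_in e V ->
  \sum_(f in EV V) 2 / (#|Kf f :&: V|%:R) = #|V|%:R - 1 :> R.
Proof.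
have [n] := ubnP #|V|; elim: n V => // n IH V lVn V0 cV.
have [x0 x0V] : exists x0, x0 \in V by apply/set0Pn.
case: (leqP #|V| 1) => V1.
  have V1' : #|V| = 1%N by apply/eqP; rewrite eqn_leq V1 card_gt0 V0.
  have /cards1P[z Vz] : #|V| == 1%N by rewrite V1'.
  rewrite V1' subrr big_pred0 // => f; rewrite !inE; apply/negbTE/negP.
  move=> /andP[/edgesP[x [y [exy ->]]] sV].
  have : x \in V by apply: (subsetP sV); rewrite !inE eqxx.
  have : y \in V by apply: (subsetP sV); rewrite !inE eqxx orbT.
  by rewrite Vz !inE => /eqP Ey /eqP Ex; subst x y; rewrite eirr in exy.
have [v vV cV'] := noncut x0V cV.
set V' := V :\ v.
have cardV : #|V| = (#|V'|).+1 by rewrite (cardsD1 v V) vV.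
have V'0 : V' != set0 by rewrite -card_gt0 -ltnS -cardV.
have lV' : (#|V'| < n)%N by rewrite -ltnS -cardV.
have {IH} IHV := IH V' lV' V'0 cV'.
set N := Nb V v; set m := #|N|.
have cN := N_clique vV cV'.
have vN : v \notin N by rewrite inE eirr andbF.
have NV' : N \subset V'.
  apply/subsetP => u uN; rewrite in_setD1; move: (uN); rewrite inE => /andP[-> _].
  by rewrite andbT; apply: contra vN => /eqP<-.
have cK : is_clique e (v |: N).
  apply/cliqueP => a b; rewrite !in_setU1 => /orP[/eqP->|aN] /orP[/eqP->|bN] ab.
  - by rewrite eqxx in ab.
  - by move: bN; rewrite inE => /andP[].
  - by move: aN; rewrite inE => /andP[_]; rewrite esym.
  - by move/cliqueP: cN; apply.
have m1 : (0 < m)%N.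
  have [u uV'] : exists u, u \in V' by apply/set0Pn.
  move: (uV'); rewrite in_setD1 => /andP[uv uV].
  have /connectP[p pp lp] : connect (erestr e V) v u by move/connectedP: cV; apply.
  case: p pp lp => [|h p] /=; first by move=> _ eq; rewrite eq eqxx in uv.
  move=> /andP[/and3P[evh _ hV] _] _.
  by apply/card_gt0P; exists h; rewrite inE hV evh.
have cardK : #|v |: N| = m.+1 by rewrite cardsU1 vN.
have E1 : \sum_(f in EV V | v \in f) 2 / (#|Kf f :&: V|%:R) = m%:R * 2 / (m.+1)%:R :> R.
  transitivity (\sum_(f in [set g in EK (v |: N) | v \in g]) 2 / (m.+1)%:R : R).
    apply: eq_big => [f|f /andP[fE vf]].
      rewrite !inE; apply/andP/andP => -[/andP[fE sf] vf]; split => //; apply/andP; split => //.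
        move/edgesP: (fE) => [x [y [exy Ef]]]; subst f.
        apply/subsetP => z; rewrite !inE => /orP[]/eqP Ez; subst z; rewrite ?eqxx //.
          move: vf; rewrite !inE => /orP[]/eqP Ev; subst v; rewrite ?eqxx //.
          by rewrite (subsetP sf) // ?inE ?eqxx // esym exy orbT.
        move: vf; rewrite !inE => /orP[]/eqP Ev; subst v; rewrite ?eqxx ?orbT //.
        by rewrite (subsetP sf) // ?inE ?eqxx ?orbT // exy orbT.
      apply: (subset_trans sf); apply/subsetP => z; rewrite in_setU1 => /orP[/eqP->//|].
      by apply: (subsetP (subset_trans NV' (subD1set V v))).
    move: fE; rewrite inE => /andP[/edgesP[x [y [exy Ef]]] sf]; subst f.
    have xV : x \in V by apply: (subsetP sf); rewrite !inE eqxx.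
    have yV : y \in V by apply: (subsetP sf); rewrite !inE eqxx orbT.
    move: vf; rewrite !inE => /orP[]/eqP Ev; subst v.
      by rewrite (Kf_vedge xV cV' yV exy) cardK.
    by rewrite setUC (Kf_vedge yV cV' xV) ?cardK // esym.
  rewrite sumr_const (EK_deg cK (setU11 v N)) cardK subn1 /=.
  by rewrite -(mulr_natl (2 / (m.+1)%:R) m) mulrA.
rewrite (bigID (fun f : {set T} => v \in f)) /= E1.
have E2 : \sum_(f in EV V | v \notin f) 2 / (#|Kf f :&: V|%:R) =
          \sum_(f in EV V') 2 / (#|Kf f :&: V|%:R) :> R.
  by apply: eq_bigl => f; rewrite !inE subsetD1 andbA.
rewrite E2 (bigID (fun f : {set T} => f \subset N)) /=.
rewrite (bigID (fun f : {set T} => f \subset N)) /= in IHV.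
set c := #|EK N|.
have EKeq : forall f, (f \in EV V') && (f \subset N) = (f \in EK N).
  move=> f; rewrite !inE; apply/andP/andP => [[/andP[fE _] fN]|[fE fN]]; split => //.
  by rewrite fE (subset_trans fN NV').
have E3 : \sum_(f in EV V' | f \subset N) 2 / (#|Kf f :&: V|%:R) = c%:R * 2 / (m.+1)%:R :> R.
  transitivity (\sum_(f in EK N) 2 / (m.+1)%:R : R).
    apply: eq_big => [f|f fP]; first exact: EKeq.
    move: fP; rewrite EKeq => /EK_edge[x [y [exy xN yN ->]]].
    by rewrite (Kf_Nedge vV cV' exy xN yN) cardK.
  by rewrite sumr_const -(mulr_natl (2 / (m.+1)%:R) c) mulrA.
have E3' : \sum_(f in EV V' | f \subset N) 2 / (#|Kf f :&: V'|%:R) = c%:R * 2 / m%:R :> R.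
  transitivity (\sum_(f in EK N) 2 / m%:R : R).
    apply: eq_big => [f|f fP]; first exact: EKeq.
    move: fP; rewrite EKeq => /EK_edge[x [y [exy xN yN ->]]].
    by rewrite /V' setIDA (Kf_Nedge vV cV' exy xN yN) setU1K.
  by rewrite sumr_const -(mulr_natl (2 / m%:R) c) mulrA.
have E4 : \sum_(f in EV V' | ~~ (f \subset N)) 2 / (#|Kf f :&: V|%:R) =
          \sum_(f in EV V' | ~~ (f \subset N)) 2 / (#|Kf f :&: V'|%:R) :> R.
  apply: eq_bigr => f /andP[]; rewrite inE => /andP[/edgesP[x [y [exy ->]]] sf] nf.
  have xV' : x \in V' by apply: (subsetP sf); rewrite !inE eqxx.
  have yV' : y \in V' by apply: (subsetP sf); rewrite !inE eqxx orbT.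
  by rewrite /V' (Kf_other exy xV' yV' nf).
have Ec : (c%:R * 2 : R) = m%:R * (m%:R - 1).
  have H1 : \sum_(g in EK N) \sum_(u in g) (1 : R) = \sum_(g in EK N) 2.
    apply: eq_bigr => g /EK_edge[x [y [exy xN yN ->]]].
    have xy : x != y by apply/eqP => h; move: exy; rewrite h eirr.
    by rewrite sum2.
  move: H1; rewrite DC // !sumr_const natrB // -(mulr_natl (2 : R) c) -/c -/m => H1.
  by rewrite -H1; ring.
rewrite E3 E4; rewrite E3' in IHV.
set X := \sum_(f in EV V' | ~~ (f \subset N)) _ in IHV *.
have mn : (m%:R : R) != 0 by rewrite pnatr_eq0 -lt0n.
have mn1 : ((m.+1)%:R : R) != 0 by rewrite pnatr_eq0.
have -> : X = #|V'|%:R - 1 - c%:R * 2 / m%:R by rewrite -IHV; ring.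
rewrite Ec cardV -!natr1.
rewrite -natr1 in mn1.
by field; rewrite mn mn1.
Qed.


Hypothesis H4 : forall K : {set T}, is_block e K -> (4 <= #|K|)%N ->
     exists a : T -> R, (forall v, v \in K -> 0 <= a v) /\
       (forall u v, u \in K -> v \in K -> u != v -> w [set u; v] = (a u + a v) / 2).

Lemma sum_blocks : \sum_(f in edges e) (w f / Cw e w f - (#|Kf f|%:R)^-1) = 0.
Proof.
rewrite (partition_big Kf (fun B => B \in Kf @: edges e)) /=; last by move=> f fE; apply: imset_f.
apply: big1 => B /imsetP[f0 f0E ->].
move/edgesP: f0E => [x0 [y0 [exy0 ->]]].
set K := Kf [set x0; y0].
have bK : is_block e K := Kf_block exy0.
have K1 : (1 < #|K|)%N.
  have x0y0 : x0 != y0 by apply/eqP => h; move: exy0; rewrite h eirr.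
  by have := subset_leq_card (Kf_sub exy0); rewrite cards2 x0y0.
transitivity (\sum_(g in EK K) (w g / Cw e w g - (#|K|%:R)^-1)); last exact: block_sum bK K1 (H4 bK).
apply: eq_big => [f|f /andP[fE /eqP ->]] //.
rewrite !inE; case fE: (f \in edges e) => //=.
move/edgesP: fE => [x [y [exy ->]]].
apply/eqP/idP => [<-|sub]; first exact: Kf_sub.
by apply: block_Kf => //; apply: (subsetP sub); rewrite !inE eqxx ?orbT.
Qed.

Lemma main_sec : (0 < #|T|)%N -> graph_connected e ->
  \sum_(f in edges e) w f / Cw e w f = (#|T|%:R - 1) / 2.
Proof.
move=> T0 gc.
have := sum_blocks; rewrite sumrB => /eqP; rewrite subr_eq0 => /eqP ->.
have T0' : [set: T] != set0 by rewrite -card_gt0 cardsT.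
have := count T0' gc; rewrite cardsT.
have -> : \sum_(f in EV [set: T]) 2 / #|Kf f :&: [set: T]|%:R =
          \sum_(f in edges e) 2 / #|Kf f|%:R :> R.
  apply: eq_big => [f|f _]; first by rewrite !inE subsetT andbT.
  by rewrite setIT.
rewrite -mulr_sumr => <-.
by field.
Qed.

End G.

Local Open Scope ring_scope.
Unset Implicit Arguments.

Theorem proposition3p3 (T : finType) (e : rel T) (R : realFieldType)
  (w : {set T} -> R) :
  (0 < #|T|)%N ->
  block_graph e ->
  (forall f, f \in edges e -> 0 < w f) ->
  (forall K : {set T}, is_block e K -> (4 <= #|K|)%N ->
     exists a : T -> R, (forall v, v \in K -> 0 <= a v) /\
       (forall u v, u \in K -> v \in K -> u != v ->
          w [set u; v] = (a u + a v) / 2)) ->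
  \sum_(f in edges e) w f / Cw e w f = (#|T|%:R - 1) / 2.
Proof.
move=> T0 [[es ei] [gc hb]] wp h4.
exact: (main_sec es ei hb wp h4 T0 gc).
Qed.
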